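(* In the setting of the context (with $g$ unimodal, symmetric about $0$ and logconcave), letting $d_2=G^{-1}\big(1-\frac{\alpha^2}{1+\alpha}\big)-d_0$, one has $$\sup_{\theta\ge0}C(\theta)\ \ge\ C(d_2)\ \ge\ G(x_1(d_2))-\frac{\alpha^2}{1+\alpha}.$$
   Context: Let $g$ be a probability density on $\mathbb{R}$, unimodal and symmetric about $0$ (i.e. $g(z)=g(-z)$ and $g$ nonincreasing on $[0,\infty)$), and logconcave ($\log g$ concave on its support), with cdf $G$ and quantile function $G^{-1}(t)=\inf\{x:G(x)\ge t\}$. Let $X$ have density $g(x-\theta)$, $\theta\ge0$, and $P_\theta$ the corresponding probability. Fix $\alpha\in(0,1)$, and set $d_0=G^{-1}(\tfrac1{1+\alpha})$. The HPD credible interval (prior $1_{[0,\infty)}(\theta)$, credibility $1-\alpha$) is $[l(X),u(X)]$ with $l(x)=\{x-G^{-1}(\tfrac12+\tfrac{1-\alpha}2G(x))\}1_{(d_0,\infty)}(x)$, $u(x)=x-G^{-1}(\alpha G(x))$ for $x\le d_0$ and $u(x)=x+G^{-1}(\tfrac12+\tfrac{1-\alpha}2G(x))$ for $x>d_0$. The frequentist coverage is $C(\theta)=P_\theta(l(X)\le\theta\le u(X))$. Let $l^{-1}(\theta)=\sup\{x:\theta\ge l(x)\}$ and $x_1(\theta)=l^{-1}(\theta)-\theta$ for $\theta\ge0$. *)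

(* Defs.v *)
From Stdlib Require Import Reals Lra ClassicalEpsilon.
Open Scope R_scope.

Definition integral_on (f : R -> R) (a b v : R) : Prop :=
  exists pr : Riemann_integrable f a b, RiemannInt pr = v.

Definition improper_integral (f : R -> R) (v : R) : Prop :=
  forall eps, 0 < eps -> exists M, forall a b, a <= - M -> M <= b ->
    exists w, integral_on f a b w /\ Rabs (w - v) < eps.

Definition is_cdf_of (g G : R -> R) : Prop :=
  (forall a b, a <= b -> integral_on g a b (G b - G a)) /\
  (forall eps, 0 < eps -> exists M, forall x, x <= - M -> Rabs (G x) < eps) /\
  (forall eps, 0 < eps -> exists M, forall x, M <= x -> Rabs (G x - 1) < eps).

Definition is_glb (E : R -> Prop) (m : R) : Prop :=
  (forall x, E x -> m <= x) /\ (forall m', (forall x, E x -> m' <= x) -> m' <= m).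

Definition glb (E : R -> Prop) : R := epsilon (inhabits 0) (is_glb E).
Definition lub (E : R -> Prop) : R := epsilon (inhabits 0) (is_lub E).

Definition Ginv (G : R -> R) (t : R) : R := glb (fun x => G x >= t).

Definition d0 (G : R -> R) (alpha : R) : R := Ginv G (1 / (1 + alpha)).

(* HPD interval endpoints *)
Definition lo (G : R -> R) (alpha x : R) : R :=
  if Rlt_dec (d0 G alpha) x
  then x - Ginv G (1/2 + (1 - alpha) / 2 * G x)
  else 0.

Definition up (G : R -> R) (alpha x : R) : R :=
  if Rle_dec x (d0 G alpha)
  then x - Ginv G (alpha * G x)
  else x + Ginv G (1/2 + (1 - alpha) / 2 * G x).

Definition cover_ind (G : R -> R) (alpha theta x : R) : R :=
  if Rle_dec (lo G alpha x) theta then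
    if Rle_dec theta (up G alpha x) then 1 else 0
  else 0.

(* frequentist coverage C(theta) = P_theta(l(X) <= theta <= u(X)),
   X having density x |-> g (x - theta) *)
Definition coverage (g G : R -> R) (alpha theta : R) : R :=
  epsilon (inhabits 0)
    (improper_integral (fun x => g (x - theta) * cover_ind G alpha theta x)).

Definition linv (G : R -> R) (alpha theta : R) : R :=
  lub (fun x => theta >= lo G alpha x).

Definition x1 (G : R -> R) (alpha theta : R) : R := linv G alpha theta - theta.

(* Main.v *)
From Stdlib Require Import Reals Lra Lia Classical ClassicalEpsilon.
From Stdlib Require Import RList.
Require Import Defs.
Open Scope R_scope.

Fixpoint grid (a d : R) (n : nat) : list R :=
  match n with O => a :: nil | S m => a :: grid (a + d) d m end.
Fixpoint vals (F : R -> R) (a d : R) (n : nat) : list R :=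
  match n with O => nil | S m => F a :: vals F (a + d) d m end.
Fixpoint lsum (F : R -> R) (a d : R) (n : nat) : R :=
  match n with O => 0 | S m => F a + lsum F (a + d) d m end.

Lemma grid_len : forall n a d, length (grid a d n) = S n.
Proof. induction n; intros; cbn [grid pos_Rl vals lsum Int_SF length]; rewrite ?INR_0; auto. Qed.
Lemma vals_len : forall n F a d, length (vals F a d n) = n.
Proof. induction n; intros; cbn [grid pos_Rl vals lsum Int_SF length]; rewrite ?INR_0; auto. Qed.

Lemma grid_pos : forall n a d i, (i <= n)%nat -> pos_Rl (grid a d n) i = a + INR i * d.
Proof.
  induction n; intros a d i Hi.
  - assert (i = 0%nat) by lia; subst; cbn [grid pos_Rl vals lsum Int_SF length]; rewrite ?INR_0; ring.
  - destruct i; cbn [grid pos_Rl vals lsum Int_SF length]; rewrite ?INR_0; [ring|].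
    rewrite IHn by lia. rewrite S_INR.
    destruct i; cbn [grid pos_Rl vals lsum Int_SF length]; rewrite ?INR_0; ring.
Qed.

Lemma vals_pos : forall n F a d i, (i < n)%nat -> pos_Rl (vals F a d n) i = F (a + INR i * d).
Proof.
  induction n; intros F a d i Hi; [lia|].
  destruct i; cbn [grid pos_Rl vals lsum Int_SF length]; rewrite ?INR_0; [f_equal; ring|].
  rewrite IHn by lia. f_equal. rewrite S_INR. destruct i; cbn [grid pos_Rl vals lsum Int_SF length]; rewrite ?INR_0; ring.
Qed.

Lemma grid_ordered : forall n a d, 0 <= d -> ordered_Rlist (grid a d n).
Proof.
  intros n a d Hd i Hi. rewrite grid_len in Hi. simpl in Hi.
  rewrite !grid_pos by lia. rewrite S_INR. nra.
Qed.

Lemma Int_SF_grid : forall n F a d, Int_SF (vals F a d n) (grid a d n) = d * lsum F a d n.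
Proof.
  induction n; intros; cbn [grid pos_Rl vals lsum Int_SF length]; rewrite ?INR_0; [ring|].
  destruct n; cbn [grid pos_Rl vals lsum Int_SF length]; rewrite ?INR_0; [ring|].
  specialize (IHn F (a + d) d). cbn [grid pos_Rl vals lsum Int_SF] in IHn. rewrite IHn. ring.
Qed.

Lemma lsum_plus : forall n F1 F2 a d,
  lsum (fun x => F1 x + F2 x) a d n = lsum F1 a d n + lsum F2 a d n.
Proof. induction n; intros; cbn [grid pos_Rl vals lsum Int_SF length]; rewrite ?INR_0; [ring|]. rewrite IHn. ring. Qed.

Lemma lsum_snoc : forall n F a d, lsum F a d (S n) = lsum F a d n + F (a + INR n * d).
Proof.
  induction n; intros.
  - cbn [lsum]. rewrite INR_0. replace (a + 0 * d) with a by ring. ring.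
  - change (lsum F a d (S (S n))) with (F a + lsum F (a + d) d (S n)).
    rewrite IHn. change (lsum F a d (S n)) with (F a + lsum F (a + d) d n).
    rewrite S_INR. replace (a + d + INR n * d) with (a + (INR n + 1) * d) by ring. ring.
Qed.

Lemma lsum_ext : forall n F1 F2 a d, 0 <= d ->
  (forall i, (i < n)%nat -> F1 (a + INR i * d) = F2 (a + INR i * d)) ->
  lsum F1 a d n = lsum F2 a d n.
Proof.
  induction n; intros F1 F2 a d Hd H; cbn [grid pos_Rl vals lsum Int_SF length]; rewrite ?INR_0; auto.
  f_equal. { specialize (H 0%nat ltac:(lia)). cbn [grid pos_Rl vals lsum] in H. rewrite Rmult_0_l, Rplus_0_r in H. auto. }
  apply IHn; auto. intros i Hi. specialize (H (S i) ltac:(lia)).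
  rewrite S_INR in H. replace (a + d + INR i * d) with (a + (INR i + 1) * d) by ring. auto.
Qed.

Lemma lsum_le : forall n F1 F2 a d, 0 <= d ->
  (forall i, (i < n)%nat -> F1 (a + INR i * d) <= F2 (a + INR i * d)) ->
  lsum F1 a d n <= lsum F2 a d n.
Proof.
  induction n; intros F1 F2 a d Hd H; cbn [grid pos_Rl vals lsum Int_SF length]; rewrite ?INR_0; [lra|].
  apply Rplus_le_compat. { specialize (H 0%nat ltac:(lia)). cbn [grid pos_Rl vals lsum] in H. rewrite Rmult_0_l, Rplus_0_r in H. auto. }
  apply IHn; auto. intros i Hi. specialize (H (S i) ltac:(lia)).
  rewrite S_INR in H. replace (a + d + INR i * d) with (a + (INR i + 1) * d) by ring. auto.
Qed.

Lemma lsum_tele : forall n (h : R -> R) a d,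
  lsum (fun x => h (x + d) - h x) a d n = h (a + INR n * d) - h a.
Proof.
  induction n; intros.
  - cbn [lsum]. rewrite INR_0. replace (a + 0 * d) with a by ring. ring.
  - rewrite lsum_snoc, IHn. rewrite S_INR.
    replace (a + INR n * d + d) with (a + (INR n + 1) * d) by ring. ring.
Qed.

Lemma lsum_zero : forall n a d, lsum (fun _ => 0) a d n = 0.
Proof. induction n; intros; cbn [lsum]; [|rewrite IHn]; ring. Qed.

Lemma find_piece : forall n a d t, 0 < d -> a <= t < a + INR (S n) * d ->
  exists i, (i <= n)%nat /\ a + INR i * d <= t < a + INR (S i) * d.
Proof.
  induction n; intros a d t Hd Ht.
  - exists 0%nat. split; [lia|]. rewrite INR_0. lra.
  - destruct (Rlt_dec t (a + INR (S n) * d)).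
    + destruct (IHn a d t Hd) as [i [Hi Hi2]]; [lra|]. exists i; split; [lia|auto].
    + exists (S n). split; [lia|]. lra.
Qed.

Lemma INR_ge1 : forall i, (1 <= i)%nat -> 1 <= INR i.
Proof. intros. apply (le_INR 1 i) in H. simpl in H. lra. Qed.

Lemma mono_RI (f h : R -> R) (a b : R) : a < b ->
  (forall x y, a <= x -> x <= y -> y <= b -> h x <= h y) ->
  (forall x, a < x < b -> f x = h x) -> Riemann_integrable f a b.
Proof.
  intros Hab Hm Hfh eps.
  set (E := Rabs (h a - f a)).
  assert (HE : 0 <= E) by apply Rabs_pos.
  assert (Hhab : h a <= h b) by (apply Hm; lra).
  set (K := (b - a) * (h b - h a + E)).
  assert (HK : 0 <= K) by (unfold K; apply Rmult_le_pos; lra).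
  assert (Heps' : 0 < eps / (K + 1)) by (apply Rdiv_lt_0_compat; [apply cond_pos|lra]).
  destruct (constructive_indefinite_description _ (archimed_cor1 _ Heps')) as [N [HN HN0]].
  destruct N as [|n]; [lia|].
  set (N := S n) in *.
  assert (HNpos : 0 < INR N) by (apply lt_0_INR; lia).
  set (d := (b - a) / INR N).
  assert (Hd : 0 < d) by (unfold d; apply Rdiv_lt_0_compat; lra).
  assert (HNd : a + INR N * d = b) by (unfold d; field; lra).
  assert (HN1 : 1 <= INR N) by (apply INR_ge1; unfold N; lia).
  set (l := grid a d N).
  assert (Hord : ordered_Rlist l) by (apply grid_ordered; lra).
  assert (Hl0 : pos_Rl l 0 = a) by (unfold l; rewrite grid_pos by lia; rewrite INR_0; ring).
  assert (HlN : pos_Rl l (pred (length l)) = b)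
    by (unfold l; rewrite grid_len; simpl pred; rewrite grid_pos by lia; auto).
  destruct (StepFun_P38 f Hord Hl0 HlN) as [phi [Hphib Hphi]].
  set (Psi := fun x => h (Rmin (x + d) b) - h x + (if Req_EM_T x a then E else 0)).
  destruct (StepFun_P38 Psi Hord Hl0 HlN) as [psi [Hpsib Hpsi]].
  assert (Hlen : pred (length l) = N) by (unfold l; rewrite grid_len; reflexivity).
  exists phi, psi. split.
  - intros t Ht. rewrite Rmin_left, Rmax_right in Ht by lra.
    destruct (Req_dec t b) as [Htb|Htb].
    + subst t. rewrite Hphib, Hpsib. unfold Psi.
      rewrite Rmin_right by lra. destruct (Req_EM_T b a); [lra|].
      rewrite Rminus_diag, Rabs_R0. lra.
    + destruct (find_piece n a d t Hd) as [i [Hi Hti]].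
      { fold N. lra. }
      assert (HiN : (i < pred (length l))%nat) by (rewrite Hlen; unfold N; lia).
      assert (Hli : pos_Rl l i = a + INR i * d) by (unfold l; apply grid_pos; unfold N; lia).
      assert (HlSi : pos_Rl l (S i) = a + INR (S i) * d) by (unfold l; apply grid_pos; unfold N; lia).
      assert (Hco : co_interval (pos_Rl l i) (pos_Rl l (S i)) t) by (unfold co_interval; rewrite Hli, HlSi; lra).
      rewrite (Hphi i HiN t Hco), (Hpsi i HiN t Hco), Hli. unfold Psi.
      assert (HSi : a + INR (S i) * d <= b).
      { rewrite <- HNd. apply Rplus_le_compat_l, Rmult_le_compat_r; [lra|]. apply le_INR; unfold N; lia. }
      rewrite S_INR in HSi, Hti.
      rewrite Rmin_left by lra.
      replace (a + INR i * d + d) with (a + (INR i + 1) * d) by ring.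
      destruct i as [|i].
      * rewrite INR_0 in *. replace (a + 0 * d) with a in * by ring.
        destruct (Req_EM_T a a) as [_|C]; [|lra].
        assert (Hmon: h a <= h (a + (0 + 1) * d)) by (apply Hm; lra).
        destruct (Req_dec t a) as [Hta|Hta].
        { subst t. rewrite Rminus_diag, Rabs_R0. lra. }
        rewrite Hfh by lra.
        assert (h a <= h t <= h (a + (0+1)*d)) by (split; apply Hm; lra).
        unfold E. replace (h t - f a) with ((h t - h a) + (h a - f a)) by ring.
        eapply Rle_trans; [apply Rabs_triang|]. rewrite (Rabs_right (h t - h a)) by lra. lra.
      * assert (H1 : 1 <= INR (S i)) by (apply INR_ge1; lia).
        destruct (Req_EM_T (a + INR (S i) * d) a) as [C|_]; [nra|].
        rewrite Hfh by nra. rewrite Hfh by nra.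
        assert (h (a + INR (S i) * d) <= h t <= h (a + (INR (S i) + 1) * d)) by (split; apply Hm; nra).
        rewrite Rabs_right by lra. lra.
  - assert (Hadapt : adapted_couple psi a b l (vals Psi a d N)).
    { unfold adapted_couple. rewrite Rmin_left, Rmax_right by lra.
      repeat split; auto.
      - unfold l. rewrite grid_len, vals_len. reflexivity.
      - intros i Hi x Hx. rewrite Hlen in Hi. rewrite vals_pos by auto.
        unfold l in Hx |- *. rewrite <- grid_pos with (n := N) by lia. fold l in Hx |- *.
        apply Hpsi; [rewrite Hlen; auto|]. unfold open_interval, co_interval in *. lra. }
    assert (Hval : RiemannInt_SF psi = d * (h b - h a + E)).
    { unfold RiemannInt_SF. destruct (Rle_dec a b) as [_|C]; [|lra].
      rewrite (StepFun_P17 (StepFun_P1 psi) Hadapt). unfold l. rewrite Int_SF_grid.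
      f_equal. unfold Psi. rewrite lsum_plus.
      rewrite (lsum_ext N (fun x => h (Rmin (x + d) b) - h x) (fun x => h (x + d) - h x)); [|lra|].
      2:{ intros i Hi. rewrite Rmin_left; auto. rewrite <- HNd.
          replace (a + INR i * d + d) with (a + (INR i + 1) * d) by ring.
          apply Rplus_le_compat_l, Rmult_le_compat_r; [lra|]. rewrite <- S_INR. apply le_INR; lia. }
      rewrite lsum_tele, HNd. f_equal.
      unfold N. cbn [lsum]. destruct (Req_EM_T a a) as [_|C]; [|lra].
      rewrite (lsum_ext n _ (fun _ => 0)); [rewrite lsum_zero; ring|lra|].
      intros i Hi. destruct (Req_EM_T (a + d + INR i * d) a); auto.
      assert (0 <= INR i) by apply pos_INR. nra. }
    rewrite Hval. rewrite Rabs_right by (apply Rle_ge, Rmult_le_pos; lra).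
    assert (d * (h b - h a + E) = K / INR N) by (unfold K, d; field; lra).
    rewrite H. apply Rle_lt_trans with ((K + 1) * / INR N).
    + unfold Rdiv. apply Rmult_le_compat_r; [left; apply Rinv_0_lt_compat; lra|lra].
    + apply Rmult_lt_reg_l with (/ (K+1)); [apply Rinv_0_lt_compat; lra|].
      rewrite <- Rmult_assoc, Rinv_l by lra. unfold Rdiv in HN. lra.
Qed.

Lemma mono_RI_dec (f h : R -> R) (a b : R) : a < b ->
  (forall x y, a <= x -> x <= y -> y <= b -> h y <= h x) ->
  (forall x, a < x < b -> f x = h x) -> Riemann_integrable f a b.
Proof.
  intros Hab Hm Hfh.
  assert (H := mono_RI (fun x => - f x) (fun x => - h x) a b Hab).
  apply Riemann_integrable_ext with (fun x => - - f x); [intros; ring|].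
  apply Riemann_integrable_Ropp. apply H.
  - intros. apply Ropp_le_contravar. apply Hm; auto.
  - intros. rewrite Hfh; auto.
Qed.

Lemma mono_RI' (f h : R -> R) (a b : R) : a <= b ->
  (forall x y, a <= x -> x <= y -> y <= b -> h x <= h y) ->
  (forall x, a < x < b -> f x = h x) -> Riemann_integrable f a b.
Proof.
  intros Hab Hm Hfh. destruct (Req_EM_T a b). subst. apply RiemannInt_P7.
  apply (mono_RI f h); auto; lra.
Qed.

Lemma mono_RI_dec' (f h : R -> R) (a b : R) : a <= b ->
  (forall x y, a <= x -> x <= y -> y <= b -> h y <= h x) ->
  (forall x, a < x < b -> f x = h x) -> Riemann_integrable f a b.
Proof.
  intros Hab Hm Hfh. destruct (Req_EM_T a b). subst. apply RiemannInt_P7.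
  apply (mono_RI_dec f h); auto; lra.
Qed.

Lemma bounds_incr : forall n a b d f h (pr : Riemann_integrable f a b), 0 <= d ->
  b = a + INR n * d ->
  (forall x y, a <= x -> x <= y -> y <= b -> h x <= h y) ->
  (forall x, a < x < b -> f x = h x) ->
  d * lsum h a d n <= RiemannInt pr <= d * lsum h (a + d) d n.
Proof.
  induction n; intros a b d f h pr Hd Hb Hm Hfh.
  - rewrite INR_0 in Hb. replace (a + 0 * d) with a in Hb by ring. subst b.
    rewrite RiemannInt_P9. cbn [lsum]. lra.
  - rewrite S_INR in Hb.
    assert (Hab : a <= a + d <= b) by (assert (0 <= INR n) by apply pos_INR; nra).
    pose proof (RiemannInt_P22 pr Hab) as pr1.
    pose proof (RiemannInt_P23 pr Hab) as pr2.
    rewrite <- (RiemannInt_P26 pr1 pr2 pr).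
    assert (H1 := RiemannInt_const_bound (l:=h a) (u:=h (a + d)) pr1 ltac:(lra)).
    assert (H2 := IHn (a + d) b d f h pr2 Hd ltac:(lra)).
    cbn [lsum].
    destruct H1 as [H1a H1b].
    { intros x Hx. rewrite Hfh by lra. split; apply Hm; lra. }
    destruct H2 as [H2a H2b].
    { intros x y Hx Hxy Hy. apply Hm; lra. }
    { intros x Hx. apply Hfh; lra. }
    replace (a + d - a) with d in * by ring. nra.
Qed.

Lemma bounds_dec : forall n a b d f h (pr : Riemann_integrable f a b), 0 <= d ->
  b = a + INR n * d ->
  (forall x y, a <= x -> x <= y -> y <= b -> h y <= h x) ->
  (forall x, a < x < b -> f x = h x) ->
  d * lsum h (a + d) d n <= RiemannInt pr <= d * lsum h a d n.
Proof.
  induction n; intros a b d f h pr Hd Hb Hm Hfh.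
  - rewrite INR_0 in Hb. replace (a + 0 * d) with a in Hb by ring. subst b.
    rewrite RiemannInt_P9. cbn [lsum]. lra.
  - rewrite S_INR in Hb.
    assert (Hab : a <= a + d <= b) by (assert (0 <= INR n) by apply pos_INR; nra).
    pose proof (RiemannInt_P22 pr Hab) as pr1.
    pose proof (RiemannInt_P23 pr Hab) as pr2.
    rewrite <- (RiemannInt_P26 pr1 pr2 pr).
    assert (H1 := RiemannInt_const_bound (l:=h (a + d)) (u:=h a) pr1 ltac:(lra)).
    assert (H2 := IHn (a + d) b d f h pr2 Hd ltac:(lra)).
    cbn [lsum].
    destruct H1 as [H1a H1b].
    { intros x Hx. rewrite Hfh by lra. split; apply Hm; lra. }
    destruct H2 as [H2a H2b].
    { intros x y Hx Hxy Hy. apply Hm; lra. }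
    { intros x Hx. apply Hfh; lra. }
    replace (a + d - a) with d in * by ring. nra.
Qed.

Lemma squeeze_eq : forall x y C, (forall n, (0 < n)%nat -> Rabs (x - y) <= C / INR n) -> x = y.
Proof.
  intros x y C H. destruct (Req_dec x y) as [|Hne]; auto. exfalso.
  assert (Hp : 0 < Rabs (x - y)) by (apply Rabs_pos_lt; lra).
  assert (HC : 0 <= C) by (specialize (H 1%nat ltac:(lia)); simpl in H; lra).
  destruct (archimed_cor1 (Rabs (x - y) / (C + 1))) as [N [HN HN0]].
  { apply Rdiv_lt_0_compat; lra. }
  specialize (H N HN0). assert (0 < INR N) by (apply lt_0_INR; auto).
  assert (C / INR N < Rabs (x - y)).
  { apply Rle_lt_trans with ((C+1) * / INR N). unfold Rdiv. apply Rmult_le_compat_r; [left; apply Rinv_0_lt_compat; lra|lra].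
    apply Rmult_lt_reg_l with (/ (C+1)); [apply Rinv_0_lt_compat; lra|].
    rewrite <- Rmult_assoc, Rinv_l by lra. unfold Rdiv in HN. lra. }
  lra.
Qed.

Lemma lsum_shift : forall n F a d c, lsum (fun s => F (s + c)) a d n = lsum F (a + c) d n.
Proof.
  induction n; intros; cbn [lsum]; auto. rewrite IHn.
  replace (a + d + c) with (a + c + d) by ring. reflexivity.
Qed.

Lemma lsum_diff : forall n F a d, lsum F (a + d) d n - lsum F a d n = F (a + INR n * d) - F a.
Proof.
  intros. assert (H := lsum_snoc n F a d). cbn [lsum] in H. lra.
Qed.

Lemma lsum_rev : forall n F K a d,
  lsum (fun y => F (K - y)) a d n = lsum F (K - a - INR n * d + d) d n.
Proof.
  induction n; intros; [reflexivity|].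
  transitivity (F (K - a) + lsum F (K - a - INR n * d) d n).
  { change (lsum (fun y => F (K - y)) a d (S n)) with (F (K - a) + lsum (fun y => F (K - y)) (a + d) d n).
    rewrite IHn. f_equal. f_equal. ring. }
  rewrite S_INR. replace (K - a - (INR n + 1) * d + d) with (K - a - INR n * d) by ring.
  rewrite lsum_snoc. replace (K - a - INR n * d + INR n * d) with (K - a) by ring. ring.
Qed.

Section Dens.
Variables (g G : R -> R).
Hypothesis Hg0 : forall z, 0 <= g z.
Hypothesis Hcdf : is_cdf_of g G.
Hypothesis Hsym : forall z, g z = g (- z).
Hypothesis Hmon : forall x y, 0 <= x <= y -> g y <= g x.

Lemma g_incr : forall x y, x <= y <= 0 -> g x <= g y.
Proof. intros. rewrite (Hsym x), (Hsym y). apply Hmon. lra. Qed.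

Lemma g_le0 : forall z, g z <= g 0.
Proof.
  intros. destruct (Rle_dec 0 z). apply Hmon; lra. apply g_incr; lra.
Qed.

Lemma G_int : forall a b, a <= b -> integral_on g a b (G b - G a).
Proof. intros. apply (proj1 Hcdf); auto. Qed.

Lemma G_mono : forall a b, a <= b -> G a <= G b.
Proof.
  intros a b H. destruct (G_int a b H) as [pr Hpr].
  assert (B := RiemannInt_const_bound (l:=0) (u:=g 0) pr H).
  destruct B as [B1 B2]. intros; split; [apply Hg0|apply g_le0]. lra.
Qed.

Lemma G_lip : forall a b, a <= b -> G b - G a <= g 0 * (b - a).
Proof.
  intros a b H. destruct (G_int a b H) as [pr Hpr].
  assert (B := RiemannInt_const_bound (l:=0) (u:=g 0) pr H).
  destruct B as [B1 B2]. intros; split; [apply Hg0|apply g_le0]. lra.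
Qed.

Lemma G_ge0 : forall x, 0 <= G x.
Proof.
  intros x. apply Rnot_lt_le. intro Hx.
  destruct (proj1 (proj2 Hcdf) (- G x) ltac:(lra)) as [M HM].
  specialize (HM (Rmin x (- M)) (Rmin_r _ _)).
  assert (G (Rmin x (-M)) <= G x) by (apply G_mono, Rmin_l).
  apply Rabs_def2 in HM. lra.
Qed.

Lemma G_le1 : forall x, G x <= 1.
Proof.
  intros x. apply Rnot_lt_le. intro Hx.
  destruct (proj2 (proj2 Hcdf) (G x - 1) ltac:(lra)) as [M HM].
  specialize (HM (Rmax x M) (Rmax_r _ _)).
  assert (G x <= G (Rmax x M)) by (apply G_mono, Rmax_l).
  apply Rabs_def2 in HM. lra.
Qed.



Lemma shift_piece : forall c a b, a <= b -> (b + c <= 0 \/ 0 <= a + c) ->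
  exists pr : Riemann_integrable (fun s => g (s + c)) a b, RiemannInt pr = G (b + c) - G (a + c).
Proof.
  intros c a b Hab Hcase.
  destruct (G_int (a + c) (b + c) ltac:(lra)) as [prg Hprg].
  destruct Hcase as [Hc|Hc].
  - assert (pr : Riemann_integrable (fun s => g (s + c)) a b).
    { apply (mono_RI' _ (fun s => g (s + c))); auto. intros. apply g_incr; lra. }
    exists pr. rewrite <- Hprg. apply squeeze_eq with ((b - a) * g 0).
    intros n Hn. assert (0 < INR n) by (apply lt_0_INR; auto).
    set (d := (b - a) / INR n).
    assert (Hd : 0 <= d) by (unfold d; apply Rmult_le_pos; [lra|left; apply Rinv_0_lt_compat; lra]).
    assert (Hb : b = a + INR n * d) by (unfold d; field; lra).
    assert (B1 := bounds_incr n a b d _ (fun s => g (s + c)) pr Hd Hb).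
    assert (B2 := bounds_incr n (a + c) (b + c) d _ g prg Hd ltac:(lra)).
    destruct B1 as [B1a B1b]. { intros. apply g_incr; lra. } { auto. }
    destruct B2 as [B2a B2b]. { intros. apply g_incr; lra. } { auto. }
    rewrite lsum_shift in B1a, B1b. replace (a + d + c) with (a + c + d) in B1b by ring.
    assert (Hdf := lsum_diff n g (a + c) d).
    replace (a + c + INR n * d) with (b + c) in Hdf by lra.
    assert (g (b + c) - g (a + c) <= g 0) by (generalize (Hg0 (a + c)) (g_le0 (b + c)); lra).
    assert (d * (g (b + c) - g (a + c)) <= (b - a) * g 0 / INR n).
    { replace ((b - a) * g 0 / INR n) with (d * g 0) by (unfold d; field; lra).
      apply Rmult_le_compat_l; auto. }
    apply Rabs_le. split; nra.
  - assert (pr : Riemann_integrable (fun s => g (s + c)) a b).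
    { apply (mono_RI_dec' _ (fun s => g (s + c))); auto. intros. apply Hmon; lra. }
    exists pr. rewrite <- Hprg. apply squeeze_eq with ((b - a) * g 0).
    intros n Hn. assert (0 < INR n) by (apply lt_0_INR; auto).
    set (d := (b - a) / INR n).
    assert (Hd : 0 <= d) by (unfold d; apply Rmult_le_pos; [lra|left; apply Rinv_0_lt_compat; lra]).
    assert (Hb : b = a + INR n * d) by (unfold d; field; lra).
    assert (B1 := bounds_dec n a b d _ (fun s => g (s + c)) pr Hd Hb).
    assert (B2 := bounds_dec n (a + c) (b + c) d _ g prg Hd ltac:(lra)).
    destruct B1 as [B1a B1b]. { intros. apply Hmon; lra. } { auto. }
    destruct B2 as [B2a B2b]. { intros. apply Hmon; lra. } { auto. }
    rewrite lsum_shift in B1a, B1b. replace (a + d + c) with (a + c + d) in B1a by ring.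
    assert (Hdf := lsum_diff n g (a + c) d).
    replace (a + c + INR n * d) with (b + c) in Hdf by lra.
    assert (g (a + c) - g (b + c) <= g 0) by (generalize (Hg0 (b + c)) (g_le0 (a + c)); lra).
    assert (d * (g (a + c) - g (b + c)) <= (b - a) * g 0 / INR n).
    { replace ((b - a) * g 0 / INR n) with (d * g 0) by (unfold d; field; lra).
      apply Rmult_le_compat_l; auto. }
    apply Rabs_le. split; nra.
Qed.

Lemma G_shift : forall c a b, a <= b ->
  integral_on (fun s => g (s + c)) a b (G (b + c) - G (a + c)).
Proof.
  intros c a b Hab.
  destruct (Rle_dec (b + c) 0) as [H1|H1]. { apply shift_piece; auto. }
  destruct (Rle_dec 0 (a + c)) as [H2|H2]. { apply shift_piece; auto. }
  destruct (shift_piece c a (- c) ltac:(lra) ltac:(lra)) as [p1 H1'].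
  destruct (shift_piece c (- c) b ltac:(lra) ltac:(lra)) as [p2 H2'].
  exists (RiemannInt_P24 p1 p2). rewrite <- (RiemannInt_P26 p1 p2). lra.
Qed.

Lemma G_refl : forall x, 0 <= x -> G 0 - G (- x) = G x - G 0.
Proof.
  intros x Hx.
  destruct (G_int (- x) 0 ltac:(lra)) as [pA HA].
  destruct (G_int 0 x ltac:(lra)) as [pB HB].
  rewrite <- HA, <- HB. apply squeeze_eq with (x * g 0).
  intros n Hn. assert (0 < INR n) by (apply lt_0_INR; auto).
  set (d := x / INR n).
  assert (Hd : 0 <= d) by (unfold d; apply Rmult_le_pos; [lra|left; apply Rinv_0_lt_compat; lra]).
  assert (Hb : x = INR n * d) by (unfold d; field; lra).
  assert (B1 := bounds_incr n (- x) 0 d _ g pA Hd ltac:(lra)).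
  assert (B2 := bounds_dec n 0 x d _ g pB Hd ltac:(lra)).
  destruct B1 as [B1a B1b]. { intros. apply g_incr; lra. } { auto. }
  destruct B2 as [B2a B2b]. { intros. apply Hmon; lra. } { auto. }
  assert (E1 : lsum g (- x) d n = lsum g (0 + d) d n).
  { rewrite (lsum_ext n g (fun y => g (0 - y))) by (auto; intros; rewrite Hsym; f_equal; ring).
    rewrite lsum_rev. f_equal. lra. }
  assert (E2 : lsum g (- x + d) d n = lsum g 0 d n).
  { rewrite (lsum_ext n g (fun y => g (0 - y))) by (auto; intros; rewrite Hsym; f_equal; ring).
    rewrite lsum_rev. f_equal. lra. }
  rewrite E1 in B1a. rewrite E2 in B1b.
  assert (Hdf := lsum_diff n g 0 d). replace (0 + INR n * d) with x in Hdf by lra.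
  replace (0 + d) with d in *.
  assert (g 0 - g x <= g 0) by (generalize (Hg0 x); lra).
  assert (d * (g 0 - g x) <= x * g 0 / INR n).
  { replace (x * g 0 / INR n) with (d * g 0) by (unfold d; field; lra).
    apply Rmult_le_compat_l; auto. }
  apply Rabs_le. split; nra. ring.
Qed.

Lemma G_half : G 0 = 1 / 2.
Proof.
  destruct (Rtotal_order (G 0) (1/2)) as [H|[H|H]]; auto; exfalso.
  - set (e := 1/2 - G 0).
    destruct (proj2 (proj2 Hcdf) e ltac:(unfold e; lra)) as [M HM].
    specialize (HM (Rmax 0 M) (Rmax_r _ _)). apply Rabs_def2 in HM.
    assert (Hr := G_refl (Rmax 0 M) (Rmax_l _ _)).
    generalize (G_ge0 (- Rmax 0 M)). unfold e in *. lra.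
  - set (e := G 0 - 1/2).
    destruct (proj1 (proj2 Hcdf) e ltac:(unfold e; lra)) as [M HM].
    specialize (HM (- Rmax 0 M) ltac:(generalize (Rmax_r 0 M); lra)). apply Rabs_def2 in HM.
    assert (Hr := G_refl (Rmax 0 M) (Rmax_l _ _)).
    generalize (G_le1 (Rmax 0 M)). unfold e in *. lra.
Qed.

Lemma G_symm : forall x, G (- x) = 1 - G x.
Proof.
  intros x. destruct (Rle_dec 0 x).
  - assert (H := G_refl x r). rewrite G_half in H. lra.
  - assert (H := G_refl (- x) ltac:(lra)). rewrite G_half, Ropp_involutive in H. lra.
Qed.


Lemma RI_scal_val : forall f a b k (pr : Riemann_integrable f a b)
  (pr2 : Riemann_integrable (fun x => k * f x) a b), a <= b -> RiemannInt pr2 = k * RiemannInt pr.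
Proof.
  intros f a b k pr pr2 Hab.
  pose (pr3 := RiemannInt_P10 k (RiemannInt_P14 a b 0) pr).
  rewrite (RiemannInt_P18 pr2 pr3 Hab) by (intros; unfold fct_cte; ring).
  unfold pr3. rewrite (RiemannInt_P13 (RiemannInt_P14 a b 0) pr).
  rewrite RiemannInt_P15. ring.
Qed.

Lemma G_strict : forall y1 y2, 0 <= y1 < y2 -> G y1 < 1 -> G y1 < G y2.
Proof.
  intros y1 y2 Hy H1.
  destruct (Rlt_le_dec (G y1) (G y2)) as [|Hle]; auto. exfalso.
  assert (Heq : G y2 = G y1) by (generalize (G_mono y1 y2 ltac:(lra)); lra).
  destruct (G_int y1 y2 ltac:(lra)) as [pr Hpr].
  assert (B := RiemannInt_const_bound (l:=g y2) (u:=g 0) pr ltac:(lra)).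
  destruct B as [B1 _]. { intros. split; [apply Hmon; lra|apply g_le0]. }
  assert (Hgy2 : g y2 = 0) by (generalize (Hg0 y2); nra).
  assert (Hconst : forall z, y2 <= z -> G z = G y2).
  { intros z Hz. destruct (G_int y2 z Hz) as [pr' Hpr'].
    assert (B := RiemannInt_const_bound (l:=0) (u:=0) pr' Hz).
    destruct B as [_ B2]. { intros. split; [apply Hg0|]. rewrite <- Hgy2. apply Hmon; lra. }
    generalize (G_mono y2 z Hz). lra. }
  destruct (proj2 (proj2 Hcdf) (1 - G y1) ltac:(lra)) as [M HM].
  specialize (HM (Rmax y2 M) (Rmax_r _ _)). rewrite Hconst in HM by apply Rmax_l.
  apply Rabs_def2 in HM. lra.
Qed.

Lemma Q_spec : forall t, 0 < t < 1 -> is_glb (fun x => G x >= t) (Ginv G t).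
Proof.
  intros t Ht. unfold Ginv, glb. apply epsilon_spec.
  set (E' := fun y => G (- y) >= t).
  assert (Hb : bound E').
  { destruct (proj1 (proj2 Hcdf) t ltac:(lra)) as [M HM]. exists M. intros y Hy.
    unfold E' in Hy. destruct (Rle_dec y M) as [|n]; auto. exfalso.
    specialize (HM (- y) ltac:(lra)). apply Rabs_def2 in HM. lra. }
  assert (Hne : exists y, E' y).
  { destruct (proj2 (proj2 Hcdf) (1 - t) ltac:(lra)) as [M HM]. exists (- M).
    unfold E'. rewrite Ropp_involutive. specialize (HM M (Rle_refl _)).
    apply Rabs_def2 in HM. lra. }
  destruct (completeness E' Hb Hne) as [m [Hm1 Hm2]].
  exists (- m). split.
  - intros x Hx. assert (E' (- x)) by (unfold E'; rewrite Ropp_involutive; auto).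
    specialize (Hm1 _ H). lra.
  - intros m' Hm'. assert (m <= - m'). { apply Hm2. intros y Hy. specialize (Hm' _ Hy). lra. } lra.
Qed.

Lemma Q_le : forall t x, 0 < t < 1 -> G x >= t -> Ginv G t <= x.
Proof. intros t x Ht Hx. apply (proj1 (Q_spec t Ht)). auto. Qed.

Lemma Q_G : forall t, 0 < t < 1 -> G (Ginv G t) = t.
Proof.
  intros t Ht. destruct (Q_spec t Ht) as [H1 H2]. set (m := Ginv G t) in *.
  assert (Hg00 := Hg0 0).
  destruct (Rtotal_order (G m) t) as [Hl|[He|Hg]]; auto; exfalso.
  - set (e := t - G m). set (dl := e / (g 0 + 1)).
    assert (Hdl : 0 < dl) by (unfold dl, e; apply Rdiv_lt_0_compat; lra).
    assert (m + dl <= m).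
    { apply H2. intros x Hx. destruct (Rle_dec (m + dl) x) as [|n]; auto. exfalso.
      assert (Hmx := H1 x Hx).
      assert (L := G_lip m x Hmx).
      assert (g 0 * (x - m) < e).
      { apply Rle_lt_trans with (g 0 * dl). apply Rmult_le_compat_l; lra.
        assert (dl * (g 0 + 1) = e) by (unfold dl; field; lra). nra. }
      unfold e in *. lra. }
    lra.
  - set (e := G m - t). set (dl := e / (g 0 + 1)).
    assert (Hdl : 0 < dl) by (unfold dl, e; apply Rdiv_lt_0_compat; lra).
    assert (Hin : G (m - dl) >= t).
    { assert (L := G_lip (m - dl) m ltac:(lra)).
      assert (g 0 * (m - (m - dl)) < e).
      { replace (m - (m - dl)) with dl by ring.
        assert (dl * (g 0 + 1) = e) by (unfold dl; field; lra). nra. }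
      unfold e in *. lra. }
    specialize (H1 _ Hin). lra.
Qed.

Lemma Q_char : forall t x, 0 < t < 1 -> Ginv G t <= x -> t <= G x.
Proof. intros. rewrite <- (Q_G t H). apply G_mono; auto. Qed.

Lemma Q_mono : forall t1 t2, 0 < t1 -> t1 <= t2 -> t2 < 1 -> Ginv G t1 <= Ginv G t2.
Proof.
  intros. apply Q_le; [lra|]. rewrite Q_G by lra. lra.
Qed.

Hypothesis Hlc : forall x y t, 0 < g x -> 0 < g y -> 0 <= t <= 1 ->
     0 < g (t * x + (1 - t) * y) /\
     t * ln (g x) + (1 - t) * ln (g y) <= ln (g (t * x + (1 - t) * y)).

Lemma ln_le_inv : forall a b, 0 < a -> 0 < b -> ln a <= ln b -> a <= b.
Proof.
  intros a b Ha Hb H. destruct (Rle_dec a b) as [|n]; auto.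
  assert (ln b < ln a) by (apply ln_increasing; lra). lra.
Qed.

Lemma lc_ratio : forall s t k, s <= t -> 0 <= k -> g (t + k) * g s <= g (s + k) * g t.
Proof.
  intros s t k Hst Hk.
  assert (P1 := Hg0 s). assert (P2 := Hg0 (t + k)). assert (P3 := Hg0 (s + k)). assert (P4 := Hg0 t).
  destruct (Req_dec (g s) 0) as [Z|Z]. { rewrite Z. nra. }
  destruct (Req_dec (g (t + k)) 0) as [Z2|Z2]. { rewrite Z2. nra. }
  destruct (Req_dec (t + k - s) 0) as [Z3|Z3].
  { assert (k = 0) by lra. assert (t = s) by lra. subst. rewrite Rplus_0_r. lra. }
  set (L := t + k - s). set (lam := (t - s) / L).
  assert (HL : 0 < L) by (unfold L; lra).
  assert (Hlam : 0 <= lam <= 1).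
  { unfold lam; split. apply Rmult_le_pos; [lra|left; apply Rinv_0_lt_compat; lra].
    apply Rmult_le_reg_r with L; auto. unfold Rdiv. rewrite Rmult_assoc, Rinv_l by lra. unfold L; lra. }
  assert (E1 : lam * s + (1 - lam) * (t + k) = s + k) by (unfold lam, L in *; field; lra).
  assert (E2 : (1 - lam) * s + (1 - (1 - lam)) * (t + k) = t) by (unfold lam, L in *; field; lra).
  destruct (Hlc s (t + k) lam ltac:(lra) ltac:(lra) Hlam) as [Q1 Q2].
  destruct (Hlc s (t + k) (1 - lam) ltac:(lra) ltac:(lra) ltac:(lra)) as [Q3 Q4].
  rewrite E1 in Q1, Q2. rewrite E2 in Q3, Q4.
  apply ln_le_inv; try (apply Rmult_lt_0_compat; lra).
  rewrite !ln_mult by lra. lra.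
Qed.


Lemma G_logconc : forall p x dl, p <= x -> 0 <= dl ->
  G p * (G (x + dl) - G x) <= G x * (G (p + dl) - G p).
Proof.
  intros p x dl Hpx Hdl.
  set (k := x - p).
  assert (Hk : 0 <= k) by (unfold k; lra).
  assert (Main : forall a, a <= p ->
     (G p - G a) * (G (x + dl) - G x) <= (G x - G (a + k)) * (G (p + dl) - G p)).
  { intros a Ha.
    set (A := G p - G a). set (B := G x - G (a + k)).
    assert (Step1 : forall t, p < t < p + dl -> A * g (t + k) <= B * g t).
    { intros t Ht.
      destruct (G_int a p Ha) as [prA HA].
      destruct (G_shift k a p Ha) as [prB HB].
      assert (HI := RiemannInt_P19 (Riemann_integrable_scal (g (t + k)) prA)
                     (Riemann_integrable_scal (g t) prB) Ha).
      rewrite (RI_scal_val _ _ _ _ prA) in HI by auto.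
      rewrite (RI_scal_val _ _ _ _ prB) in HI by auto.
      rewrite HA, HB in HI. replace (p + k) with x in HI by (unfold k; ring).
      unfold A, B. rewrite (Rmult_comm (G p - G a)), (Rmult_comm (G x - G (a + k))).
      apply HI. intros s Hs. rewrite (Rmult_comm (g t)). apply lc_ratio; lra. }
    destruct (G_shift k p (p + dl) ltac:(lra)) as [prC HC].
    destruct (G_int p (p + dl) ltac:(lra)) as [prD HD].
    assert (HI := RiemannInt_P19 (Riemann_integrable_scal A prC)
                     (Riemann_integrable_scal B prD) ltac:(lra) Step1).
    rewrite (RI_scal_val _ _ _ _ prC) in HI by lra.
    rewrite (RI_scal_val _ _ _ _ prD) in HI by lra.
    rewrite HC, HD in HI. replace (p + dl + k) with (x + dl) in HI by (unfold k; ring).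
    replace (p + k) with x in HI by (unfold k; ring). exact HI. }
  assert (Dx : 0 <= G (x + dl) - G x <= 1) by (generalize (G_mono x (x + dl) ltac:(lra)) (G_le1 (x + dl)) (G_ge0 x); lra).
  assert (Dp : 0 <= G (p + dl) - G p) by (generalize (G_mono p (p + dl) ltac:(lra)); lra).
  apply Rnot_lt_le. intro Hc.
  set (e := G p * (G (x + dl) - G x) - G x * (G (p + dl) - G p)).
  destruct (proj1 (proj2 Hcdf) e ltac:(unfold e; lra)) as [M HM].
  set (a := Rmin p (- M)).
  specialize (HM a (Rmin_r _ _)). apply Rabs_def2 in HM.
  specialize (Main a (Rmin_l _ _)).
  assert (G0a := G_ge0 a). assert (G0ak := G_ge0 (a + k)).
  assert (G a * (G (x + dl) - G x) <= G a) by nra.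
  assert (G (a + k) * (G (p + dl) - G p) >= 0) by nra.
  unfold e in *. nra.
Qed.


Lemma g_zero_left : forall x z, G x <= 0 -> z < x -> g z = 0.
Proof.
  intros x z Hx Hz.
  assert (Hx0 : x < 0).
  { destruct (Rlt_le_dec x 0) as [|H]; auto. assert (G 0 <= G x) by (apply G_mono; auto).
    rewrite G_half in H0. lra. }
  destruct (G_int z x ltac:(lra)) as [pr Hpr].
  assert (B := RiemannInt_const_bound (l:=g z) (u:=g 0) pr ltac:(lra)).
  destruct B as [B1 _]. { intros. split; [apply g_incr; lra|apply g_le0]. }
  assert (G0 := G_ge0 z). assert (P := Hg0 z). nra.
Qed.

Lemma glb_exists : forall E : R -> Prop, (exists x, E x) -> (exists m, forall x, E x -> m <= x) ->
  exists m, is_glb E m.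
Proof.
  intros E [x0 Hx0] [m0 Hm0].
  set (E' := fun y => E (- y)).
  assert (Hb : bound E') by (exists (- m0); intros y Hy; specialize (Hm0 _ Hy); lra).
  assert (Hne : exists y, E' y) by (exists (- x0); unfold E'; rewrite Ropp_involutive; auto).
  destruct (completeness E' Hb Hne) as [m [Hm1 Hm2]].
  exists (- m). split.
  - intros x Hx. assert (E' (- x)) by (unfold E'; rewrite Ropp_involutive; auto).
    specialize (Hm1 _ H). lra.
  - intros m' Hm'. assert (m <= - m'). { apply Hm2. intros y Hy. specialize (Hm' _ Hy). lra. } lra.
Qed.

Lemma improper_unique : forall f v1 v2, improper_integral f v1 -> improper_integral f v2 -> v1 = v2.
Proof.
  intros f v1 v2 H1 H2. destruct (Req_dec v1 v2) as [|Hne]; auto. exfalso.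
  assert (Hlt : 0 < Rabs (v1 - v2)) by (apply Rabs_pos_lt; lra).
  set (e := Rabs (v1 - v2) / 2).
  destruct (H1 e ltac:(unfold e; lra)) as [M1 HM1].
  destruct (H2 e ltac:(unfold e; lra)) as [M2 HM2].
  set (M := Rmax (Rabs M1) (Rabs M2)).
  assert (A1 : - M <= - M1) by (unfold M; generalize (Rmax_l (Rabs M1) (Rabs M2)) (Rle_abs M1); lra).
  assert (A2 : - M <= - M2) by (unfold M; generalize (Rmax_r (Rabs M1) (Rabs M2)) (Rle_abs M2); lra).
  assert (A3 : M1 <= M) by (unfold M; generalize (Rmax_l (Rabs M1) (Rabs M2)) (Rle_abs M1); lra).
  assert (A4 : M2 <= M) by (unfold M; generalize (Rmax_r (Rabs M1) (Rabs M2)) (Rle_abs M2); lra).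
  destruct (HM1 (- M) M ltac:(lra) A3) as [w1 [[p1 Hp1] Hw1]].
  destruct (HM2 (- M) M ltac:(lra) A4) as [w2 [[p2 Hp2] Hw2]].
  rewrite (RiemannInt_P5 p1 p2) in Hp1. subst w1 w2.
  assert (Rabs (v1 - v2) <= Rabs (RiemannInt p2 - v1) + Rabs (RiemannInt p2 - v2)).
  { replace (v1 - v2) with (- (RiemannInt p2 - v1) + (RiemannInt p2 - v2)) by ring.
    eapply Rle_trans; [apply Rabs_triang|]. rewrite Rabs_Ropp. lra. }
  unfold e in *. lra.
Qed.

Variable alpha : R.
Hypothesis Halpha : 0 < alpha < 1.

Let p0 := 1 / (1 + alpha).
Let c := alpha ^ 2 / (1 + alpha).
Let D0 := d0 G alpha.
Let q := Ginv G (1 - c).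
Let th := q - D0.

Lemma consts : 1/2 < p0 < 1 /\ 0 < c /\ p0 < 1 - c < 1 /\ 1 - p0 = alpha * p0 /\ alpha * (1 - p0) = c.
Proof.
  unfold p0, c. repeat split.
  - apply Rmult_lt_reg_r with (2 * (1 + alpha)); [lra|]. field_simplify; lra.
  - apply Rmult_lt_reg_r with (1 + alpha); [lra|]. field_simplify; lra.
  - apply Rdiv_lt_0_compat; nra.
  - apply Rmult_lt_reg_r with (1 + alpha); [lra|]. field_simplify; nra.
  - assert (0 < alpha ^ 2 / (1 + alpha)) by (apply Rdiv_lt_0_compat; nra). lra.
  - field; lra.
  - field; lra.
Qed.

Lemma GD0 : G D0 = p0.
Proof. unfold D0, d0. apply Q_G. generalize consts; unfold p0; lra. Qed.

Lemma D0_pos : 0 < D0.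
Proof.
  destruct (Rlt_le_dec 0 D0) as [|H]; auto. assert (G D0 <= G 0) by (apply G_mono; auto).
  rewrite GD0, G_half in H0. generalize consts; lra.
Qed.

Lemma Gq : G q = 1 - c.
Proof. unfold q. apply Q_G. generalize consts; lra. Qed.

Lemma th_pos : 0 < th.
Proof.
  unfold th. destruct (Rlt_le_dec D0 q) as [|H]; [lra|].
  assert (G q <= G D0) by (apply G_mono; auto). rewrite Gq, GD0 in H0. generalize consts; lra.
Qed.

Lemma GmD0 : G (- D0) = alpha * p0.
Proof. rewrite G_symm, GD0. generalize consts; lra. Qed.

Lemma Gmq : G (- q) = c.
Proof. rewrite G_symm, Gq. ring. Qed.

Definition hh (x : R) := 1/2 + (1 - alpha) / 2 * G x.

Lemma lo_small : forall x, x <= D0 -> lo G alpha x = 0.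
Proof. intros. unfold lo. fold D0. destruct (Rlt_dec D0 x); [lra|auto]. Qed.

Lemma lo_big : forall x, D0 < x -> lo G alpha x = x - Ginv G (hh x).
Proof. intros. unfold lo. fold D0. destruct (Rlt_dec D0 x); [auto|lra]. Qed.

Lemma up_small : forall x, x <= D0 -> up G alpha x = x - Ginv G (alpha * G x).
Proof. intros. unfold up. fold D0. destruct (Rle_dec x D0); [auto|lra]. Qed.

Lemma up_big : forall x, D0 < x -> up G alpha x = x + Ginv G (hh x).
Proof. intros. unfold up. fold D0. destruct (Rle_dec x D0); [lra|auto]. Qed.

Lemma hh_range : forall x, D0 < x -> p0 <= hh x < 1.
Proof.
  intros x Hx. assert (G D0 <= G x) by (apply G_mono; lra). rewrite GD0 in H.
  assert (Gl := G_le1 x). generalize consts; intros C. unfold hh. split.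
  - replace p0 with (1/2 + (1 - alpha) / 2 * p0) by (unfold p0; field; lra).
    apply Rplus_le_compat_l. apply Rmult_le_compat_l; [lra|auto].
  - assert ((1 - alpha) / 2 * G x <= (1 - alpha) / 2) by (apply Rmult_le_reg_r with 2; [lra|]; field_simplify; nra).
    lra.
Qed.

Lemma lo_mono : forall x y, D0 < x -> x <= y -> lo G alpha x <= lo G alpha y.
Proof.
  intros x y Hx Hxy. rewrite !lo_big by lra.
  assert (Rx := hh_range x Hx). assert (Ry := hh_range y ltac:(lra)).
  assert (C := consts).
  set (px := Ginv G (hh x)).
  assert (Gpx : G px = hh x) by (apply Q_G; lra).
  assert (Hpx0 : 0 <= px).
  { destruct (Rle_lt_dec 0 px) as [|H]; auto. assert (G px <= G 0) by (apply G_mono; lra).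
    rewrite G_half in H0. lra. }
  assert (GxD := G_mono D0 x ltac:(lra)). rewrite GD0 in GxD.
  assert (Hpxx : px <= x).
  { apply Q_le; [lra|]. unfold hh. apply Rle_ge.
    assert (p0 * (1 + alpha) = 1) by (unfold p0; field; lra). nra. }
  set (dl := y - x).
  assert (Hint : G y - G x <= G (px + dl) - G px).
  { destruct (G_shift (x - px) px (px + dl) ltac:(unfold dl; lra)) as [pr1 H1].
    destruct (G_int px (px + dl) ltac:(unfold dl; lra)) as [pr2 H2].
    assert (HI := RiemannInt_P19 pr1 pr2 ltac:(unfold dl; lra)).
    replace (px + dl + (x - px)) with y in H1 by (unfold dl; ring).
    replace (px + (x - px)) with x in H1 by ring.
    rewrite <- H1, <- H2. apply HI. intros s Hs. apply Hmon. lra. }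
  assert (Ginv G (hh y) <= px + dl).
  { apply Q_le; [lra|]. unfold hh in *. rewrite Gpx in Hint.
    assert (G x <= G y) by (apply G_mono; lra).
    assert ((1 - alpha) / 2 * (G y - G x) <= G y - G x) by (apply Rmult_le_reg_r with 2; [lra|]; field_simplify; nra).
    lra. }
  unfold dl in H. lra.
Qed.

Lemma up_mono : forall x y, x <= y -> y <= D0 -> 0 < G x -> up G alpha x <= up G alpha y.
Proof.
  intros x y Hxy HyD Gx. rewrite !up_small by lra.
  assert (C := consts).
  assert (Gxy := G_mono x y Hxy). assert (Gy1 := G_le1 y).
  set (p := Ginv G (alpha * G x)).
  assert (Gp : G p = alpha * G x) by (apply Q_G; split; nra).
  assert (Hpx : p <= x) by (apply Q_le; [split; nra|]; nra).
  assert (L := G_logconc p x (y - x) Hpx ltac:(lra)).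
  replace (x + (y - x)) with y in L by ring. rewrite Gp in L.
  assert (alpha * G y <= G (p + (y - x))).
  { apply Rmult_le_reg_l with (G x); auto. nra. }
  assert (Ginv G (alpha * G y) <= p + (y - x)) by (apply Q_le; [split; nra|lra]).
  lra.
Qed.

Lemma up_mD0 : th <= up G alpha (- D0).
Proof.
  assert (HD := D0_pos). assert (C := consts).
  rewrite up_small by lra. rewrite GmD0.
  replace (alpha * (alpha * p0)) with c by (destruct C as [_ [_ [_ [E1 E2]]]]; rewrite <- E2, E1; ring).
  assert (Ginv G c <= - q) by (apply Q_le; [lra|rewrite Gmq; lra]).
  unfold th. lra.
Qed.

Lemma Q_ap0 : - D0 <= Ginv G (alpha * p0).
Proof.
  assert (C := consts). assert (HD := D0_pos).
  assert (Hr : 0 < alpha * p0 < 1) by (split; nra).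
  apply (proj2 (Q_spec _ Hr)). intros z Hz.
  destruct (Rle_lt_dec (- D0) z) as [|Hlt]; auto. exfalso.
  assert (S := G_strict D0 (- z) ltac:(lra) ltac:(rewrite GD0; lra)).
  rewrite GD0 in S. assert (E := G_symm (- z)). rewrite Ropp_involutive in E. lra.
Qed.

Lemma up_large : forall x, D0 < x -> th <= up G alpha x.
Proof.
  intros x Hx. assert (C := consts). assert (HD := D0_pos).
  rewrite up_big by auto. assert (R := hh_range x Hx).
  assert (D0 <= Ginv G (hh x)) by (unfold D0, d0; apply Q_mono; fold p0; lra).
  assert (U1 := up_mD0).
  assert (U2 := up_mono (- D0) D0 ltac:(lra) (Rle_refl _) ltac:(rewrite GmD0; nra)).
  rewrite (up_small D0 (Rle_refl _)), GD0 in U2.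
  assert (Q := Q_ap0). lra.
Qed.


Definition fcov (x : R) := g (x - th) * cover_ind G alpha th x.
Let Aset := fun x => th >= lo G alpha x.
Let s := linv G alpha th.

Lemma A_ub : forall x, Aset x -> x <= Rmax D0 (th + Ginv G (1 - alpha / 2)).
Proof.
  intros x Hx. unfold Aset in Hx. destruct (Rle_lt_dec x D0) as [H|H].
  - eapply Rle_trans; [exact H|apply Rmax_l].
  - rewrite lo_big in Hx by auto. assert (R := hh_range x H). assert (C := consts).
    assert (Ginv G (hh x) <= Ginv G (1 - alpha / 2)).
    { apply Q_mono; try lra. unfold hh. assert (G x <= 1) by apply G_le1.
      assert ((1 - alpha) / 2 * G x <= (1 - alpha) / 2) by (apply Rmult_le_reg_r with 2; [lra|]; field_simplify; nra).
      lra. }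
    eapply Rle_trans; [|apply Rmax_r]. lra.
Qed.

Lemma A_D0 : Aset D0.
Proof. unfold Aset. rewrite lo_small by lra. generalize th_pos; lra. Qed.

Lemma s_lub : is_lub Aset s.
Proof.
  unfold s, linv, lub. apply epsilon_spec.
  assert (Hb : bound Aset) by (exists (Rmax D0 (th + Ginv G (1 - alpha / 2))); intros x Hx; apply A_ub; auto).
  destruct (completeness Aset Hb (ex_intro _ D0 A_D0)) as [m Hm]. exists m; auto.
Qed.

Lemma A_below : forall x, x < s -> Aset x.
Proof.
  intros x Hx. apply NNPP. intro Hn.
  assert (s <= x).
  { apply (proj2 s_lub). intros y Hy. destruct (Rle_lt_dec y x) as [|Hyx]; auto. exfalso. apply Hn.
    destruct (Rle_lt_dec x D0) as [Hx0|Hx0].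
    - unfold Aset. rewrite lo_small by auto. generalize th_pos; lra.
    - unfold Aset in *. assert (lo G alpha x <= lo G alpha y) by (apply lo_mono; lra). lra. }
  lra.
Qed.

Lemma A_above : forall x, s < x -> th < lo G alpha x.
Proof.
  intros x Hx. destruct (Rlt_le_dec th (lo G alpha x)) as [|H]; auto.
  assert (x <= s) by (apply (proj1 s_lub); unfold Aset; lra). lra.
Qed.

Lemma D0_le_s : D0 <= s.
Proof. apply (proj1 s_lub). apply A_D0. Qed.

Definition Bp (x : R) := 0 < G x /\ th <= up G alpha x.

Lemma Bp_up : forall x y, Bp y -> y <= x -> Bp x.
Proof.
  intros x y [Hy1 Hy2] Hyx. split.
  - generalize (G_mono y x Hyx); lra.
  - destruct (Rle_lt_dec x D0) as [H|H].
    + assert (up G alpha y <= up G alpha x) by (apply up_mono; auto). lra.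
    + apply up_large; auto.
Qed.

Lemma Bp_mD0 : Bp (- D0).
Proof. split. rewrite GmD0. generalize consts; intros; nra. apply up_mD0. Qed.

Lemma f_in : forall x, Bp x -> x < s -> fcov x = g (x - th).
Proof.
  intros x [_ H2] Hx. unfold fcov, cover_ind. assert (A := A_below x Hx). unfold Aset in A.
  destruct (Rle_dec (lo G alpha x) th); [|lra]. destruct (Rle_dec th (up G alpha x)); [|lra]. ring.
Qed.

Lemma f_out_s : forall x, s < x -> fcov x = 0.
Proof.
  intros x Hx. unfold fcov, cover_ind. assert (A := A_above x Hx).
  destruct (Rle_dec (lo G alpha x) th); [lra|]. ring.
Qed.

Lemma f_out_B : forall x, ~ Bp x -> fcov x = 0.
Proof.
  intros x Hx. unfold fcov, cover_ind. unfold Bp in Hx.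
  destruct (Rlt_le_dec 0 (G x)) as [HG|HG].
  - destruct (Rle_dec th (up G alpha x)); [tauto|]. destruct (Rle_dec (lo G alpha x) th); ring.
  - rewrite (g_zero_left x (x - th) HG) by (generalize th_pos; lra). ring.
Qed.

Lemma int_mid : forall F r s', r < s' -> (forall x, r < x < s' -> F x = g (x - th)) ->
  exists pr : Riemann_integrable F r s', RiemannInt pr = G (s' - th) - G (r - th).
Proof.
  intros F r s' Hrs HF.
  assert (pr : Riemann_integrable F r s').
  { destruct (Rle_lt_dec s' th) as [H1|H1].
    - apply (mono_RI' F (fun x => g (x - th))); auto; [lra|]. intros. apply g_incr; lra.
    - destruct (Rle_lt_dec th r) as [H2|H2].
      + apply (mono_RI_dec' F (fun x => g (x - th))); auto; [lra|]. intros. apply Hmon; lra.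
      + apply RiemannInt_P24 with th.
        * apply (mono_RI' F (fun x => g (x - th))); [lra| |]. intros. apply g_incr; lra. intros; apply HF; lra.
        * apply (mono_RI_dec' F (fun x => g (x - th))); [lra| |]. intros. apply Hmon; lra. intros; apply HF; lra. }
  exists pr. destruct (G_shift (- th) r s' ltac:(lra)) as [pr' Hpr'].
  rewrite (RiemannInt_P18 pr pr' ltac:(lra) HF). exact Hpr'.
Qed.

Lemma int_zero : forall F a b, a <= b -> (forall x, a < x < b -> F x = 0) ->
  exists pr : Riemann_integrable F a b, RiemannInt pr = 0.
Proof.
  intros F a b Hab HF.
  assert (pr : Riemann_integrable F a b) by (apply (mono_RI' F (fun _ => 0)); auto; intros; lra).
  exists pr. assert (B := RiemannInt_const_bound (l:=0) (u:=0) pr Hab).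
  destruct B as [B1 B2]. { intros. rewrite HF; auto; lra. } lra.
Qed.

Lemma cov_main : exists v, improper_integral fcov v /\ v >= G (s - th) - c.
Proof.
  assert (C := consts). assert (HD := D0_pos). assert (Hs := D0_le_s). assert (Ht := th_pos).
  destruct (classic (exists x0, ~ Bp x0)) as [[x0 Hx0]|Hall].
  - destruct (glb_exists Bp (ex_intro _ (- D0) Bp_mD0)) as [r [Hr1 Hr2]].
    { exists x0. intros y Hy. destruct (Rle_lt_dec x0 y) as [|H]; auto. exfalso. apply Hx0.
      apply Bp_up with y; auto; lra. }
    assert (HrD : r <= - D0) by (apply Hr1; apply Bp_mD0).
    assert (Hmid : forall x, r < x < s -> fcov x = g (x - th)).
    { intros x Hx. apply f_in; [|lra]. apply NNPP. intro Hn.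
      assert (x <= r). { apply Hr2. intros y Hy. destruct (Rle_lt_dec x y) as [|H]; auto. exfalso.
        apply Hn. apply Bp_up with y; auto; lra. } lra. }
    assert (Hleft : forall x, x < r -> fcov x = 0).
    { intros x Hx. apply f_out_B. intro HB. specialize (Hr1 x HB). lra. }
    exists (G (s - th) - G (r - th)). split.
    + intros e He. exists (Rabs r + Rabs s + 1). intros a b Ha Hb.
      assert (a < r) by (generalize (Rle_abs (- r)); rewrite Rabs_Ropp; generalize (Rabs_pos s); lra).
      assert (s < b) by (generalize (Rle_abs s) (Rabs_pos r); lra).
      destruct (int_zero fcov a r ltac:(lra) ltac:(intros; apply Hleft; lra)) as [p1 H1].
      destruct (int_mid fcov r s ltac:(lra) Hmid) as [p2 H2].
      destruct (int_zero fcov s b ltac:(lra) ltac:(intros; apply f_out_s; lra)) as [p3 H3].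
      exists (G (s - th) - G (r - th)). split.
      * exists (RiemannInt_P24 (RiemannInt_P24 p1 p2) p3).
        rewrite <- (RiemannInt_P26 (RiemannInt_P24 p1 p2) p3).
        rewrite <- (RiemannInt_P26 p1 p2). lra.
      * rewrite Rminus_diag, Rabs_R0. auto.
    + assert (G (r - th) <= G (- q)) by (apply G_mono; unfold th; lra).
      rewrite Gmq in H. lra.
  - assert (Hall' : forall x, Bp x) by (intro x; apply NNPP; intro; apply Hall; exists x; auto).
    exists (G (s - th)). split.
    + intros e He. destruct (proj1 (proj2 Hcdf) e He) as [M0 HM0].
      exists (Rabs M0 + Rabs s + Rabs th + 1). intros a b Ha Hb.
      assert (a < s) by (generalize (Rle_abs (- s)); rewrite Rabs_Ropp; generalize (Rabs_pos M0) (Rabs_pos th); lra).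
      assert (s < b) by (generalize (Rle_abs s) (Rabs_pos M0) (Rabs_pos th); lra).
      assert (a - th <= - M0) by (generalize (Rle_abs M0) (Rabs_pos s) (Rabs_pos th); lra).
      destruct (int_mid fcov a s ltac:(lra) ltac:(intros; apply f_in; auto; lra)) as [p2 H2].
      destruct (int_zero fcov s b ltac:(lra) ltac:(intros; apply f_out_s; lra)) as [p3 H3].
      exists (G (s - th) - G (a - th)). split.
      * exists (RiemannInt_P24 p2 p3). rewrite <- (RiemannInt_P26 p2 p3). lra.
      * replace (G (s - th) - G (a - th) - G (s - th)) with (- G (a - th)) by ring.
        rewrite Rabs_Ropp. apply HM0; auto.
    + lra.
Qed.

Lemma final_sec :
  (forall M, is_lub (fun cv => exists theta, 0 <= theta /\ cv = coverage g G alpha theta) M ->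
     coverage g G alpha th <= M) /\
  coverage g G alpha th >= G (x1 G alpha th) - c.
Proof.
  split.
  - intros M HM. apply (proj1 HM). exists th. split; auto. left; apply th_pos.
  - destruct cov_main as [v [Hv Hge]].
    assert (E : coverage g G alpha th = v).
    { apply improper_unique with fcov; auto. unfold coverage. apply epsilon_spec. exists v. exact Hv. }
    rewrite E. unfold x1. fold s. exact Hge.
Qed.

End Dens.

Theorem mainTheorem6 (g G : R -> R) (alpha : R) :
  0 < alpha < 1 ->
  (forall z, 0 <= g z) ->
  is_cdf_of g G ->
  (forall z, g z = g (- z)) ->
  (forall x y, 0 <= x <= y -> g y <= g x) ->
  (forall x y t, 0 < g x -> 0 < g y -> 0 <= t <= 1 ->
     0 < g (t * x + (1 - t) * y) /\
     t * ln (g x) + (1 - t) * ln (g y) <= ln (g (t * x + (1 - t) * y))) ->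
  let d2 := Ginv G (1 - alpha ^ 2 / (1 + alpha)) - d0 G alpha in
  (forall M, is_lub (fun c => exists theta, 0 <= theta /\ c = coverage g G alpha theta) M ->
     coverage g G alpha d2 <= M) /\
  coverage g G alpha d2 >= G (x1 G alpha d2) - alpha ^ 2 / (1 + alpha).
Proof.
  intros Ha Hg0 Hcdf Hsym Hmon Hlc d2.
  exact (final_sec g G Hg0 Hcdf Hsym Hmon Hlc alpha Ha).
Qed.
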